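(* Let $(\alpha,\beta)\in\mathcal{A}(K,L,T)$. Then operations (1) and (2) (defined in the context) are not both applicable to $(\alpha,\beta)$. Moreover, applying operation (1) twice in succession, first with index $i$ and then with index $i'$, yields the same degree table as applying it first with index $i'$ and then with index $i$; the same holds for operation (2).
   Context: A degree table with parameters $K,L,T$ is a tuple $(\alpha_{\mathrm p},\alpha_{\mathrm s},\beta_{\mathrm p},\beta_{\mathrm s})$ of nonnegative integer vectors of lengths $K,T,L,T$ such that, with $\alpha=(\alpha_{\mathrm p}\mid\alpha_{\mathrm s})$, $\beta=(\beta_{\mathrm p}\mid\beta_{\mathrm s})$: entries of $\alpha$ are distinct; entries of $\beta$ are distinct; every $n\in\operatorname{Set}(\alpha_{\mathrm p})+\operatorname{Set}(\beta_{\mathrm p})$ has a unique representation $n=i+j$ with $i\in\operatorname{Set}(\alpha)$, $j\in\operatorname{Set}(\beta)$; $\mathcal{A}(K,L,T)$ is the set of these. For such a table let $p$, $q$ be the entries of $\alpha$, $\beta$ sorted increasingly, $a=\min\operatorname{Set}(\alpha)$, $A=\max\operatorname{Set}(\alpha)$, $b=\min\operatorname{Set}(\beta)$, $B=\max\operatorname{Set}(\beta)$. Operation (1) with index $i$ ($1\le i<K+T$) is applicable if $p_i+B<(p_{i+1}-1)+b$ and replaces $\alpha$ by $\alpha'$ with $\alpha'_j=\alpha_j$ if $\alpha_j\le p_i$ and $\alpha'_j=\alpha_j-1$ otherwise. Operation (2) with index $i$ ($1\le i<L+T$) is applicable if $q_i+A<(q_{i+1}-1)+a$ and replaces $\beta$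 by $\beta'$ with $\beta'_j=\beta_j$ if $\beta_j\le q_i$ and $\beta'_j=\beta_j-1$ otherwise. An operation is applicable to a table if it is applicable with some index; indices refer to the sorted order of the current table. *)

(* Defs.v *)
From mathcomp Require Import all_boot.
Set Implicit Arguments. Unset Strict Implicit. Unset Printing Implicit Defensive.

(* A (candidate) degree table: alpha_p, alpha_s, beta_p, beta_s.
   The lengths K, T, L, T are imposed by [inA]. *)
Record table := Table {
  alp : seq nat;
  als : seq nat;
  bep : seq nat;
  bes : seq nat
}.

Definition alpha (t : table) : seq nat := alp t ++ als t.
Definition beta  (t : table) : seq nat := bep t ++ bes t.

Definition inA (K L T : nat) (t : table) : Prop :=
  [/\ size (alp t) = K, size (als t) = T, size (bep t) = L & size (bes t) = T] /\
  uniq (alpha t) /\ uniq (beta t) /\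
      (forall x y, x \in alp t -> y \in bep t ->
      forall i j i' j', i \in alpha t -> j \in beta t ->
        i' \in alpha t -> j' \in beta t ->
        i + j = x + y -> i' + j' = x + y -> i = i' /\ j = j').

(* sorted entries p (of alpha) and q (of beta), 1-based indexing *)
Definition psort (t : table) : seq nat := sort leq (alpha t).
Definition qsort (t : table) : seq nat := sort leq (beta t).
Definition pidx (t : table) (i : nat) : nat := nth 0 (psort t) i.-1.
Definition qidx (t : table) (i : nat) : nat := nth 0 (qsort t) i.-1.

Definition amin (t : table) : nat := head 0 (psort t).
Definition amax (t : table) : nat := last 0 (psort t).
Definition bmin (t : table) : nat := head 0 (qsort t).
Definition bmax (t : table) : nat := last 0 (qsort t).

(* Operation (1) with index i is applicable:
   1 <= i < K+T  and  p_i + B < (p_{i+1} - 1) + b  (integer inequality,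
   written without subtraction). *)
Definition app1 (t : table) (i : nat) : bool :=
  (1 <= i < size (alpha t)) && (pidx t i + bmax t + 1 < pidx t i.+1 + bmin t).

Definition app2 (t : table) (i : nat) : bool :=
  (1 <= i < size (beta t)) && (qidx t i + amax t + 1 < qidx t i.+1 + amin t).

Definition shift (c x : nat) : nat := if x <= c then x else x - 1.

Definition op1 (t : table) (i : nat) : table :=
  Table (map (shift (pidx t i)) (alp t)) (map (shift (pidx t i)) (als t))
        (bep t) (bes t).

Definition op2 (t : table) (i : nat) : table :=
  Table (alp t) (als t)
        (map (shift (qidx t i)) (bep t)) (map (shift (qidx t i)) (bes t)).

Definition applicable1 (t : table) : Prop := exists i, app1 t i.
Definition applicable2 (t : table) : Prop := exists i, app2 t i.

(* Main.v *)
Require Import Defs.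
From mathcomp Require Import all_boot.
From mathcomp Require Import zify.

Ltac splitif := match goal with |- context[if ?b then _ else _] =>
  lazymatch b with context[if _ then _ else _] => fail | _ =>
  let H := fresh in case H: b; [ | move/negbT: H => H] end end.
Ltac shcase := rewrite /shift; repeat splitif; lia.

Definition ap (s : seq nat) b B i :=
  (1 <= i < size s) && (nth 0 s i.-1 + B + 1 < nth 0 s i + b).

Lemma shift_homo c : {homo shift c : x y / x <= y}.
Proof. move=> x y h; move: h; shcase. Qed.

Lemma sort_map_shift c a :
  sort leq (map (shift c) a) = map (shift c) (sort leq a).
Proof.
rewrite -[RHS](sorted_sort leq_trans); last first.
  exact: (homo_sorted (shift_homo c) _ (sort_sorted leq_total a)).
apply/(perm_sortP leq_total leq_trans anti_leq).
by apply: perm_map; rewrite perm_sym perm_sort.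
Qed.

Lemma nth_shift c s k : nth 0 (map (shift c) s) k = shift c (nth 0 s k).
Proof.
case: (ltnP k (size s)) => h; first by rewrite (nth_map 0).
by rewrite !nth_default ?size_map.
Qed.

Lemma shift_comm c c' x :
  shift (shift c c') (shift c x) = shift (shift c' c) (shift c' x).
Proof. shcase. Qed.

Lemma Le s m k : sorted leq s -> m <= k -> k < size s -> nth 0 s m <= nth 0 s k.
Proof.
move=> ss mk ks; apply: (sorted_leq_nth leq_trans leqnn 0 ss) => //; rewrite inE; lia.
Qed.

Lemma Lt s m k : sorted leq s -> uniq s -> m < k -> k < size s -> nth 0 s m < nth 0 s k.
Proof.
move=> ss us mk ks.
have sl : sorted ltn s by rewrite ltn_sorted_uniq_leq us ss.
apply: (sorted_ltn_nth ltn_trans 0 sl) => //; rewrite inE; lia.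
Qed.

Lemma ap_comm s b B i i' : sorted leq s -> uniq s -> b <= B ->
  ap s b B i -> ap (map (shift (nth 0 s i.-1)) s) b B i' ->
  ap s b B i' /\ ap (map (shift (nth 0 s i'.-1)) s) b B i.
Proof.
rewrite /ap !size_map !nth_shift => ss us bB /andP[/andP[i1 iS] hi] /andP[/andP[j1 jS] hj].
have L1 := @Le s _ _ ss (leq_pred i') jS.
split.
  apply/andP; split; first by apply/andP.
  move: hj L1; shcase.
apply/andP; split; first by apply/andP.
have [ei|ni] := eqVneq i i'.
  by subst.
have : nth 0 s i'.-1 < nth 0 s i.-1 \/ nth 0 s i <= nth 0 s i'.-1.
  case: (ltngtP i' i) => h.
  - left; apply: Lt => //; lia.
  - right; apply: Le => //; lia.
  - by rewrite h eqxx in ni.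
have L2 := @Le s _ _ ss (leq_pred i) iS.
move: hi L2; shcase.
Qed.

Lemma bounds s b B i : sorted leq s -> ap s b B i ->
  head 0 s + B + 1 < last 0 s + b.
Proof.
move=> ss /andP[/andP[i1 iS] h].
have h1 : head 0 s <= nth 0 s i.-1 by rewrite -nth0; apply: Le => //; lia.
have h2 : nth 0 s i <= last 0 s by rewrite -nth_last; apply: Le => //; lia.
lia.
Qed.

Lemma hl s : sorted leq s -> head 0 s <= last 0 s.
Proof.
move=> ss; case: s ss => [//|x s] ss.
rewrite -nth0 -nth_last; apply: Le => //=.
Qed.

Theorem lemma5 (K L T : nat) (t : table) :
  inA K L T t ->
  ~ (applicable1 t /\ applicable2 t) /\
  (forall i i', app1 t i -> app1 (op1 t i) i' ->
     [/\ app1 t i', app1 (op1 t i') i & op1 (op1 t i) i' = op1 (op1 t i') i]) /\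
  (forall i i', app2 t i -> app2 (op2 t i) i' ->
     [/\ app2 t i', app2 (op2 t i') i & op2 (op2 t i) i' = op2 (op2 t i') i]).
Proof.
move=> [_ [ua [ub _]]].
have sp : sorted leq (psort t) by exact: (@sort_sorted nat leq leq_total (alpha t)).
have sq : sorted leq (qsort t) by exact: (@sort_sorted nat leq leq_total (beta t)).
have up : uniq (psort t) by rewrite sort_uniq.
have uq : uniq (qsort t) by rewrite sort_uniq.
have A1 : forall t i, app1 t i = ap (psort t) (bmin t) (bmax t) i.
  by move=> t' i; rewrite /app1 /ap size_sort.
have A2 : forall t i, app2 t i = ap (qsort t) (amin t) (amax t) i.
  by move=> t' i; rewrite /app2 /ap size_sort.
have P1 : forall i, psort (op1 t i) = map (shift (pidx t i)) (psort t).
  by move=> i; rewrite /psort /alpha /= -map_cat sort_map_shift.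
have Q2 : forall i, qsort (op2 t i) = map (shift (qidx t i)) (qsort t).
  by move=> i; rewrite /qsort /beta /= -map_cat sort_map_shift.
split.
  move=> [[i hi] [j hj]].
  rewrite A1 in hi; rewrite A2 in hj.
  have := @bounds _ _ _ _ sp hi; have := @bounds _ _ _ _ sq hj.
  rewrite /amin /amax /bmin /bmax; lia.
split.
  move=> i i'; rewrite !A1 P1 => hi hj.
  have bB : bmin t <= bmax t by exact: hl.
  have [h1 h2] := @ap_comm _ _ _ _ _ sp up bB hi hj.
  split => //; first by rewrite P1.
  have E : forall i i', pidx (op1 t i) i' = shift (pidx t i) (pidx t i').
    by move=> k k'; rewrite /pidx P1 nth_shift.
  rewrite [op1 (op1 t i) i']/op1 [op1 (op1 t i') i]/op1 !E /op1 /=; congr Table; rewrite -!map_comp;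
    apply: eq_map => x /=; exact: shift_comm.
move=> i i'; rewrite !A2 Q2 => hi hj.
have bB : amin t <= amax t by exact: hl.
have [h1 h2] := @ap_comm _ _ _ _ _ sq uq bB hi hj.
split => //; first by rewrite Q2.
have E : forall i i', qidx (op2 t i) i' = shift (qidx t i) (qidx t i').
  by move=> k k'; rewrite /qidx Q2 nth_shift.
rewrite [op2 (op2 t i) i']/op2 [op2 (op2 t i') i]/op2 !E /op2 /=; congr Table; rewrite -!map_comp;
  apply: eq_map => x /=; exact: shift_comm.
Qed.
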